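(* Let $h, j_2\in\mathbb{R}$ with $j_2\neq 0$, and suppose the cubic $P(z)=-2z^3+2z^2+2hz-\frac{j_2^2}{2}$ has three distinct real roots $z_1<z_2<z_3$ (then $z_1<0<z_2<z_3$). Define $$I_1(h,j_2)=\frac{\sqrt2}{2\pi}\int_{z_2}^{z_3}\frac{\sqrt{P(z)}}{z}\,dz .$$ Then $$2\pi I_1(h,j_2)=g_1K(\kappa)+g_2E(\kappa)+g_3\Pi(n,\kappa),$$ where $$g_1=\frac{4(2h+z_1)}{3\sqrt{z_3-z_1}},\quad g_2=\frac{4\sqrt{z_3-z_1}}{3},\quad g_3=-\frac{j_2^2}{z_3\sqrt{z_3-z_1}},\qquad \kappa^2=\frac{z_3-z_2}{z_3-z_1},\quad n=\frac{z_3-z_2}{z_3}.$$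
   Context: Setting: the champagne bottle Hamiltonian $H=\frac12(y_1^2+y_2^2)-(x_1^2+x_2^2)+(x_1^2+x_2^2)^2$ in polar coordinates reads $H=\frac12(p_r^2+p_\varphi^2/r^2)+r^4-r^2$, with angular momentum $p_\varphi$. For energy $h$ and angular momentum value $\ell$, the quantities above are the rescaled ones: $j_2=\sqrt2\,\ell$ and $I_1=\sqrt2\cdot\frac{1}{2\pi}\oint p_r\,dr$ (the radial action, computed with $z=r^2$), which equals $\frac{\sqrt2}{4\pi}\oint_\beta \frac{w}{z}dz$ over the real oval $\beta$ of $w^2=P(z)$ encircling $[z_2,z_3]$. $K(\kappa)=\int_0^{\pi/2}\frac{dt}{\sqrt{1-\kappa^2\sin^2t}}$, $E(\kappa)=\int_0^{\pi/2}\sqrt{1-\kappa^2\sin^2 t}\,dt$, $\Pi(n,\kappa)=\int_0^{\pi/2}\frac{dt}{(1-n\sin^2t)\sqrt{1-\kappa^2\sin^2t}}$ are the complete elliptic integrals of the first, second and third kind in Legendre form. *)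

(* Defs.v *)
From Stdlib Require Import Reals.
From Coquelicot Require Import Coquelicot.
Open Scope R_scope.

Definition Pcub (h j2 z : R) : R :=
  -2 * z ^ 3 + 2 * z ^ 2 + 2 * h * z - j2 ^ 2 / 2.

Definition ellK (kappa : R) : R :=
  RInt (fun t => / sqrt (1 - kappa ^ 2 * sin t ^ 2)) 0 (PI / 2).

Definition ellE (kappa : R) : R :=
  RInt (fun t => sqrt (1 - kappa ^ 2 * sin t ^ 2)) 0 (PI / 2).

Definition ellPi (n kappa : R) : R :=
  RInt (fun t => / ((1 - n * sin t ^ 2) * sqrt (1 - kappa ^ 2 * sin t ^ 2)))
       0 (PI / 2).

(* Rescaled radial action I_1(h, j2), given the two largest roots z2 < z3. *)
Definition I1 (h j2 z2 z3 : R) : R :=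
  sqrt 2 / (2 * PI) * RInt (fun z => sqrt (Pcub h j2 z) / z) z2 z3.

(* Main.v *)
Require Import Defs.
From Stdlib Require Import Reals Lra.
From Coquelicot Require Import Coquelicot.
Open Scope R_scope.

Lemma bracket (z3 r u : R) :
  let z2 := r*r + 1 - 2*z3 in let z1 := z3 - r*r in let M := z3 - z2 in let L := r*r in
  let h := -(z1*z2+z1*z3+z2*z3) in let jj := -4*z1*z2*z3 in
  r <> 0 -> z3 <> 0 -> z3 - M*u <> 0 -> 1 - M/z3*u <> 0 ->
  4*M*M*u*(1-u)*r*(1 - M/L*u)/(z3 - M*u) =
  4*(2*h+z1)/(3*r) + 4*r/3*(1 - M/L*u) + (-(jj/(z3*r)))/(1 - M/z3*u)
  + (-4*M*r/3)*((1-2*u)*(1-M/L*u) - M/L*u*(1-u)).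
Proof. cbv zeta. intros. field. auto. Qed.

Lemma vieta (h j2 z1 z2 z3 : R) :
  j2 <> 0 -> z1 < z2 -> z2 < z3 ->
  Pcub h j2 z1 = 0 -> Pcub h j2 z2 = 0 -> Pcub h j2 z3 = 0 ->
  z1 + z2 + z3 = 1 /\ h = -(z1*z2+z1*z3+z2*z3) /\ j2^2 = -4*z1*z2*z3
  /\ z1 < 0 /\ 0 < z2.
Proof.
  intros Hj H12 H23 P1 P2 P3.
  assert (F : forall a b, Pcub h j2 a - Pcub h j2 b =
     (a - b) * (-2*(a*a+a*b+b*b) + 2*(a+b) + 2*h)) by (intros; unfold Pcub; ring).
  assert (Q12 : -2*(z1*z1+z1*z2+z2*z2) + 2*(z1+z2) + 2*h = 0).
  { pose proof (F z1 z2) as E. rewrite P1, P2, Rminus_0_r in E.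
    destruct (Rmult_integral _ _ (eq_sym E)); [lra|auto]. }
  assert (Q13 : -2*(z1*z1+z1*z3+z3*z3) + 2*(z1+z3) + 2*h = 0).
  { pose proof (F z1 z3) as E. rewrite P1, P3, Rminus_0_r in E.
    destruct (Rmult_integral _ _ (eq_sym E)); [lra|auto]. }
  assert (S : z1 + z2 + z3 = 1).
  { assert (E : (z2 - z3) * (2 - 2*(z1+z2+z3)) = 0) by lra.
    destruct (Rmult_integral _ _ E); lra. }
  assert (Hh : h = -(z1*z2+z1*z3+z2*z3)).
  { replace z3 with (1 - z1 - z2) by lra. nra. }
  assert (Hjj : j2^2 = -4*z1*z2*z3).
  { unfold Pcub in P1. replace z3 with (1 - z1 - z2) in * by lra. subst h. nra. }
  assert (Hp : 0 < j2^2) by (apply pow2_gt_0; auto).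
  split; [auto|]. split; [auto|]. split; [auto|].
  split.
  - destruct (Rlt_or_le z1 0) as [|Hz]; auto.
    exfalso. assert (0 < z2) by lra. assert (0 < z3) by lra.
    assert (0 <= z1*z2) by nra. nra.
  - destruct (Rlt_or_le 0 z2) as [|Hz]; auto.
    exfalso. assert (0 < z3) by lra. assert (0 <= z1*z2) by nra. nra.
Qed.
Lemma pointwise (h j2 z1 z2 z3 s c D r sq k2 : R) :
  z1 + z2 + z3 = 1 -> h = -(z1*z2+z1*z3+z2*z3) -> j2^2 = -4*z1*z2*z3 ->
  z1 < 0 -> 0 < z2 -> z2 < z3 ->
  s*s + c*c = 1 -> 0 <= s -> 0 <= c -> D*D = 1 - k2*s^2 -> 0 < D ->
  k2 = (z3-z2)/(z3-z1) -> r*r = z3 - z1 -> 0 < r -> sq*sq = 2 -> 0 < sq ->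
  0 < 1 - (z3-z2)/z3*s^2 ->
  (-(2*(z3-z2)*s*c)) * (sqrt (Pcub h j2 (z3 - (z3-z2)*s^2)) / (z3 - (z3-z2)*s^2))
  = -(1/sq) * ( 4 * (2 * h + z1) / (3 * r) * / D + 4 * r / 3 * D
     + (- (j2 ^ 2 / (z3 * r))) * / ((1 - (z3-z2)/z3*s^2) * D)
     + (-4*(z3-z2)*r/3) * ((c*c - s*s)*D - k2*s^2*c^2/D)).
Proof.
  intros S Hh Hjj Hz1 Hz2 Hz23 Hsc Hs Hc HD HDp Hk Hr Hrp Hsq Hsqp Hn.
  assert (Hz3 : 0 < z3) by lra.
  assert (Hzz : 0 < z3 - (z3-z2)*s^2).
  { apply Rmult_lt_reg_r with (/z3). apply Rinv_0_lt_compat; lra.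
    rewrite Rmult_0_l. replace ((z3 - (z3 - z2) * s ^ 2) * / z3) with (1 - (z3-z2)/z3*s^2) by (field; lra). lra. }
  assert (Hsqrt : sqrt (Pcub h j2 (z3 - (z3-z2)*s^2)) = sq*(z3-z2)*s*c*r*D).
  { assert (EP : sq*(z3-z2)*s*c*r*D * (sq*(z3-z2)*s*c*r*D) = Pcub h j2 (z3 - (z3-z2)*s^2)).
    { unfold Pcub. rewrite Hh.
      replace (j2^2) with (-4*z1*z2*z3) by auto.
      replace (sq*(z3-z2)*s*c*r*D * (sq*(z3-z2)*s*c*r*D))
        with ((sq*sq)*(z3-z2)*(z3-z2)*(s*s)*(c*c)*(r*r)*(D*D)) by ring.
      rewrite Hsq, HD, Hr, Hk.
      replace (c*c) with (1 - s*s) by lra.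
      replace z1 with (1 - z2 - z3) by lra.
      field. lra. }
    assert (0 <= sq*(z3-z2)*s*c*r*D) by (repeat apply Rmult_le_pos; lra).
    apply sqrt_lem_1; auto. rewrite <- EP. nra. }
  rewrite Hsqrt.
  assert (HDn : D <> 0) by lra.
  assert (Hsqn : sq <> 0) by lra.
  assert (Hrn : r <> 0) by lra.
  transitivity (-(1/(sq*D)) * (4*(z3-z2)*(z3-z2)*(s*s)*(c*c)*r*(D*D)/(z3 - (z3-z2)*s^2)) * (sq*sq/2)).
  { field. lra. }
  symmetry.
  transitivity (-(1/(sq*D)) * (4 * (2 * h + z1) / (3 * r) + 4 * r / 3 * (D*D)
     + (- (j2 ^ 2 / (z3 * r))) / (1 - (z3-z2)/z3*s^2)
     + (-4*(z3-z2)*r/3) * ((c*c - s*s)*(D*D) - k2*s^2*(c*c)))).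
  { field. lra. }
  rewrite Hsq, HD, Hjj, Hh, Hk.
  replace (c*c) with (1 - s*s) by lra.
  assert (E1 : z1 = z3 - r*r) by lra.
  assert (E2 : z2 = r*r + 1 - 2*z3) by lra.
  rewrite E2, E1. rewrite E2 in Hn, Hzz.
  rewrite E1 in Hr. 
  replace (z3 - (z3 - r*r)) with (r*r) by ring.

  field. repeat split; lra.
Qed.

Ltac cont_tac := apply (@ex_derive_continuous R_AbsRing R_NormedModule).

Theorem lemma1 (h j2 z1 z2 z3 : R) :
  j2 <> 0 ->
  z1 < z2 -> z2 < z3 ->
  Pcub h j2 z1 = 0 -> Pcub h j2 z2 = 0 -> Pcub h j2 z3 = 0 ->
  let g1 := 4 * (2 * h + z1) / (3 * sqrt (z3 - z1)) in
  let g2 := 4 * sqrt (z3 - z1) / 3 in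
  let g3 := - (j2 ^ 2 / (z3 * sqrt (z3 - z1))) in
  let kappa := sqrt ((z3 - z2) / (z3 - z1)) in
  let n := (z3 - z2) / z3 in
  2 * PI * I1 h j2 z2 z3
  = g1 * ellK kappa + g2 * ellE kappa + g3 * ellPi n kappa.
Proof.
  intros Hj H12 H23 P1 P2 P3 g1 g2 g3 kappa n.
  destruct (vieta h j2 z1 z2 z3 Hj H12 H23 P1 P2 P3) as (S & Hh & Hjj & Hz1 & Hz2).
  assert (Hk2 : kappa ^ 2 = (z3 - z2) / (z3 - z1)).
  { unfold kappa. apply pow2_sqrt. apply Rlt_le, Rdiv_lt_0_compat; lra. }
  assert (Hk1 : kappa ^ 2 < 1).
  { rewrite Hk2. apply Rmult_lt_reg_r with (z3 - z1). lra.
    field_simplify; lra. }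
  assert (Hk0 : 0 <= kappa ^ 2) by (rewrite Hk2; apply Rlt_le, Rdiv_lt_0_compat; lra).
  assert (Hn1 : n < 1).
  { unfold n. apply Rmult_lt_reg_r with z3. lra. field_simplify; lra. }
  assert (Hn0 : 0 < n) by (unfold n; apply Rdiv_lt_0_compat; lra).
  assert (Hs2 : forall t, 0 <= sin t ^ 2 <= 1).
  { intro t. pose proof (SIN_bound t). split; nra. }
  assert (HDp : forall t, 0 < 1 - kappa ^ 2 * sin t ^ 2).
  { intro t. pose proof (Hs2 t). nra. }
  assert (HNp : forall t, 0 < 1 - n * sin t ^ 2).
  { intro t. pose proof (Hs2 t). nra. }
  assert (Hfix1 : forall t, 1 + - (kappa ^ 2 * (sin t * (sin t * 1))) = 1 - kappa ^ 2 * sin t ^ 2) by (intro; ring).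
  assert (Hfix2 : forall t, 1 + - (n * (sin t * (sin t * 1))) = 1 - n * sin t ^ 2) by (intro; ring).
  assert (HDn : forall t, sqrt (1 - kappa ^ 2 * sin t ^ 2) <> 0).
  { intro t. apply Rgt_not_eq, sqrt_lt_R0, HDp. }
  set (Del := fun t => sqrt (1 - kappa ^ 2 * sin t ^ 2)).
  set (K0 := fun t => / sqrt (1 - kappa ^ 2 * sin t ^ 2)).
  set (E0 := fun t => sqrt (1 - kappa ^ 2 * sin t ^ 2)).
  set (P0 := fun t => / ((1 - n * sin t ^ 2) * sqrt (1 - kappa ^ 2 * sin t ^ 2))).
  set (Dd := fun t => sin t * cos t * sqrt (1 - kappa ^ 2 * sin t ^ 2)).
  set (dD := fun t => (cos t * cos t - sin t * sin t) * sqrt (1 - kappa ^ 2 * sin t ^ 2)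
        - kappa ^ 2 * sin t ^ 2 * cos t ^ 2 / sqrt (1 - kappa ^ 2 * sin t ^ 2)).
  assert (cK : forall t, continuous K0 t).
  { intro t. cont_tac. unfold K0. auto_derive. rewrite Hfix1. split; auto. }
  assert (cE : forall t, continuous E0 t).
  { intro t. cont_tac. unfold E0. auto_derive. rewrite Hfix1. auto. }
  assert (cP : forall t, continuous P0 t).
  { intro t. cont_tac. unfold P0. auto_derive. rewrite Hfix1, Hfix2.
    repeat split; auto. apply Rmult_integral_contrapositive; split; auto.
    apply Rgt_not_eq, HNp. }
  assert (cdD : forall t, continuous dD t).
  { intro t. cont_tac. unfold dD. auto_derive. rewrite Hfix1. repeat split; auto. }
  assert (dDd : forall t, is_derive Dd t (dD t)).
  { intro t. unfold Dd, dD. auto_derive. rewrite Hfix1; auto.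
    rewrite Hfix1. field. auto. }
  set (f := fun z => sqrt (Pcub h j2 z) / z).
  assert (cf : forall z, 0 < z -> continuous f z).
  { intros z Hz. unfold f, Rdiv.
    apply (continuous_mult (fun z => sqrt (Pcub h j2 z)) (fun z => / z)).
    - apply (continuous_comp (fun z => Pcub h j2 z) sqrt).
      + cont_tac. unfold Pcub. auto_derive. auto.
      + apply continuous_sqrt.
    - cont_tac. auto_derive. lra. }
  set (gg := fun t => z3 - (z3 - z2) * sin t ^ 2).
  set (dg := fun t => - (2 * (z3 - z2) * sin t * cos t)).
  assert (Hc1 : forall x, Rmin 0 (PI/2) <= x <= Rmax 0 (PI/2) -> continuous f (gg x)).
  { intros x _. apply cf. unfold gg. pose proof (Hs2 x).
    assert (0 <= (z3 - z2) * (1 - sin x ^2)) by (apply Rmult_le_pos; lra). lra. }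
  assert (Hc2 : forall x, Rmin 0 (PI/2) <= x <= Rmax 0 (PI/2) -> is_derive gg x (dg x) /\ continuous dg x).
  { intros x _. split.
    + unfold gg, dg. auto_derive. exact I. ring.
    + cont_tac. unfold dg. auto_derive. exact I. }
  pose proof (@RInt_comp R_CompleteNormedModule f gg dg 0 (PI/2) Hc1 Hc2) as Hcomp.
  change (RInt (fun y => dg y * f (gg y)) 0 (PI/2) = RInt f (gg 0) (gg (PI/2))) in Hcomp.
  assert (Hg0 : gg 0 = z3) by (unfold gg; rewrite sin_0; ring).
  assert (Hg1 : gg (PI/2) = z2) by (unfold gg; rewrite sin_PI2; ring).
  rewrite Hg0, Hg1 in Hcomp.
  assert (exf : ex_RInt f z3 z2).
  { apply (@ex_RInt_continuous R_CompleteNormedModule). intros z Hz. apply cf.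
    rewrite Rmin_right in Hz; lra. }
  assert (Hswap : RInt f z2 z3 = - RInt f z3 z2).
  { rewrite <- (opp_RInt_swap f z3 z2 exf). reflexivity. }
  assert (HPI : 0 < PI/2) by (pose proof PI_RGT_0; lra).
  assert (Hmin : Rmin 0 (PI/2) = 0) by (apply Rmin_left; lra).
  assert (Hmax : Rmax 0 (PI/2) = PI/2) by (apply Rmax_right; lra).
  assert (iK : is_RInt K0 0 (PI/2) (ellK kappa)).
  { apply (RInt_correct (V:=R_CompleteNormedModule)). apply (@ex_RInt_continuous R_CompleteNormedModule). intros; apply cK. }
  assert (iE : is_RInt E0 0 (PI/2) (ellE kappa)).
  { apply (RInt_correct (V:=R_CompleteNormedModule)). apply (@ex_RInt_continuous R_CompleteNormedModule). intros; apply cE. }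
  assert (iP : is_RInt P0 0 (PI/2) (ellPi n kappa)).
  { apply (RInt_correct (V:=R_CompleteNormedModule)). apply (@ex_RInt_continuous R_CompleteNormedModule). intros; apply cP. }
  pose proof (@is_RInt_derive R_CompleteNormedModule Dd dD 0 (PI/2) (fun x _ => dDd x) (fun x _ => cdD x)) as iD.
  assert (iD' : is_RInt dD 0 (PI/2) 0).
  { assert (E : Dd (PI/2) - Dd 0 = 0).
    { unfold Dd. rewrite sin_0, cos_PI2. ring. }
    assert (iD2 : is_RInt dD 0 (PI/2) (Dd (PI/2) - Dd 0)) by exact iD.
    rewrite E in iD2. exact iD2. }
  set (sq := sqrt 2). set (r := sqrt (z3 - z1)).
  set (c1 := -(1/sq)*g1). set (c2 := -(1/sq)*g2). set (c3 := -(1/sq)*g3).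
  set (c4 := -(1/sq)*(-4*(z3-z2)*r/3)).
  pose proof (is_RInt_plus _ _ _ _ _ _ (is_RInt_scal _ _ _ c1 _ iK)
               (is_RInt_plus _ _ _ _ _ _ (is_RInt_scal _ _ _ c2 _ iE)
                 (is_RInt_plus _ _ _ _ _ _ (is_RInt_scal _ _ _ c3 _ iP)
                     (is_RInt_scal _ _ _ c4 _ iD')))) as Isum.
  assert (Isum' : is_RInt (fun y => c1 * K0 y + (c2 * E0 y + (c3 * P0 y + c4 * dD y))) 0 (PI/2)
     (c1 * ellK kappa + (c2 * ellE kappa + (c3 * ellPi n kappa + c4 * 0)))) by exact Isum.
  assert (Hsq : sq * sq = 2) by (apply sqrt_sqrt; lra).
  assert (Hsqp : 0 < sq) by (apply sqrt_lt_R0; lra).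
  assert (Hr : r * r = z3 - z1) by (apply sqrt_sqrt; lra).
  assert (Hrp : 0 < r) by (apply sqrt_lt_R0; lra).
  assert (Ih : is_RInt (fun y => dg y * f (gg y)) 0 (PI/2)
     (c1 * ellK kappa + (c2 * ellE kappa + (c3 * ellPi n kappa + c4 * 0)))).
  { apply (is_RInt_ext _ _ _ _ _ ) with (2 := Isum').
    rewrite Hmin, Hmax. intros x Hx.
    assert (Hsx : 0 < sin x) by (apply sin_gt_0; lra).
    assert (Hcx : 0 < cos x) by (apply cos_gt_0; lra).
    assert (HDx : sqrt (1 - kappa ^ 2 * sin x ^ 2) * sqrt (1 - kappa ^ 2 * sin x ^ 2) = 1 - kappa ^ 2 * sin x ^ 2)
      by (apply sqrt_sqrt; apply Rlt_le, HDp).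
    assert (HDpx : 0 < sqrt (1 - kappa ^ 2 * sin x ^ 2)) by (apply sqrt_lt_R0, HDp).
    assert (Hsc : sin x * sin x + cos x * cos x = 1) by (pose proof (sin2_cos2 x); unfold Rsqr in *; lra).
    unfold dg, f, gg.
    rewrite (pointwise h j2 z1 z2 z3 (sin x) (cos x) (sqrt (1 - kappa ^ 2 * sin x ^ 2)) r sq (kappa ^ 2)
       S Hh Hjj Hz1 Hz2 H23 Hsc (Rlt_le _ _ Hsx) (Rlt_le _ _ Hcx) HDx HDpx Hk2 Hr Hrp Hsq Hsqp (HNp x)).
    unfold c1, c2, c3, c4, K0, E0, P0, dD, g1, g2, g3, n. unfold r. match goal with |- ?a = ?b => change (@eq R a b) end. ring. }
  apply (is_RInt_unique (V:=R_CompleteNormedModule)) in Ih.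
  assert (Ih2 : RInt (fun y => dg y * f (gg y)) 0 (PI/2) =
     c1 * ellK kappa + (c2 * ellE kappa + (c3 * ellPi n kappa + c4 * 0))) by exact Ih.
  rewrite Hcomp in Ih2.
  unfold I1. fold f. rewrite Hswap, Ih2.
  unfold c1, c2, c3, c4. fold sq.
  assert (PI <> 0) by (pose proof PI_RGT_0; lra).
  field. lra.
Qed.
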